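(* Let $(\mathbf A,\tau)$ be a subdirectly irreducible state-morphism algebra such that $\mathbf A$ is subdirectly reducible (i.e. not subdirectly irreducible). Then there is a subdirectly irreducible algebra $\mathbf B$ of the same type as $\mathbf A$ such that $(\mathbf A,\tau)$ is $\mathbf B$-subdiagonal, i.e. $(\mathbf A,\tau)$ embeds into the diagonal state-morphism algebra $D(\mathbf B)=(\mathbf B\times\mathbf B,\tau_B)$.
   Context: Let $F$ be an arbitrary algebraic type. A state-morphism on an algebra $\mathbf A$ of type $F$ is an endomorphism $\tau:\mathbf A\to\mathbf A$ with $\tau\circ\tau=\tau$; $(\mathbf A,\tau)$, viewed as an algebra of type $F$ extended by the unary operation $\tau$, is a state-morphism algebra, and subdirect irreducibility of $(\mathbf A,\tau)$ refers to this extended algebra. For an algebra $\mathbf B$ of type $F$, $D(\mathbf B)=(\mathbf B\times\mathbf B,\tau_B)$ with $\tau_B(x,y)=(x,x)$ is the diagonal state-morphism algebra; an embedding of state-morphism algebras is an injective homomorphism of type $F$ commuting with the unary operations. *)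

(* Defs.v *)
From mathcomp Require Import all_boot.
From Stdlib Require Import RelationClasses.

Set Implicit Arguments.
Unset Strict Implicit.
Unset Printing Implicit Defensive.

Record signature := Signature { sym : Type; arity : sym -> nat }.

Record algebra (F : signature) := Algebra {
  carrier :> Type;
  op : forall s : sym F, ('I_(arity s) -> carrier) -> carrier }.
Arguments op {F} _ _ _.

Definition is_hom {F : signature} (A B : algebra F) (f : A -> B) : Prop :=
  forall (s : sym F) (a : 'I_(arity s) -> A), f (op A s a) = op B s (fun i => f (a i)).

Definition is_congruence {F : signature} (A : algebra F) (R : A -> A -> Prop) : Prop :=
  Equivalence R /\
  forall (s : sym F) (a b : 'I_(arity s) -> A),
    (forall i, R (a i) (b i)) -> R (op A s a) (op A s b).

Arguments is_congruence {F} A R.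
Arguments is_hom {F} A B f.

Definition nontrivial_rel {T : Type} (R : T -> T -> Prop) : Prop :=
  exists x y, R x y /\ x <> y.

(* Subdirect irreducibility: A has a monolith, i.e. a least congruence
   among the congruences different from the identity (this forces A to be
   nontrivial). *)
Definition subdirectly_irreducible {F : signature} (A : algebra F) : Prop :=
  exists mu : A -> A -> Prop,
    is_congruence A mu /\ nontrivial_rel mu /\
    forall theta, is_congruence A theta -> nontrivial_rel theta ->
      forall x y, mu x y -> theta x y.

Arguments subdirectly_irreducible {F} A.

Definition ext_sig (F : signature) : signature :=
  Signature (fun o : option (sym F) => match o with Some s => arity s | None => 1 end).

Definition sm_alg {F : signature} (A : algebra F) (tau : A -> A) : algebra (ext_sig F) :=
  @Algebra (ext_sig F) A
    (fun o => match o return ('I_(@arity (ext_sig F) o) -> A) -> A with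
              | Some s => op A s
              | None => fun a => tau (a ord0)
              end).

Arguments sm_alg {F} A tau.

Definition state_morphism {F : signature} (A : algebra F) (tau : A -> A) : Prop :=
  is_hom A A tau /\ forall x, tau (tau x) = tau x.

Arguments state_morphism {F} A tau.

Definition prod_alg {F : signature} (B C : algebra F) : algebra F :=
  @Algebra F (B * C)%type
    (fun s a => (op B s (fun i => (a i).1), op C s (fun i => (a i).2))).

Arguments prod_alg {F} B C.

Definition diag_tau {F : signature} (B : algebra F) : prod_alg B B -> prod_alg B B :=
  fun p => (p.1, p.1).

Arguments diag_tau {F} B _.

Definition sm_embedding {F : signature} (A : algebra F) (tau : A -> A)
    (A' : algebra F) (tau' : A' -> A') (f : A -> A') : Prop :=
  injective f /\ is_hom A A' f /\ forall x, f (tau x) = tau' (f x).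
Arguments sm_embedding {F} A tau A' tau' f.

(* Main.v *)
Require Import Defs.
From mathcomp Require Import all_boot.
From mathcomp Require classical_sets.
From Stdlib Require Import Classical ClassicalEpsilon FunctionalExtensionality PropExtensionality ProofIrrelevance RelationClasses.

Set Implicit Arguments.
Unset Strict Implicit.

Section Quot.
Variables (F : signature) (A : algebra F) (al : A -> A -> Prop).
Hypothesis alC : is_congruence A al.

Definition Qt := {P : A -> Prop | exists x, P = al x}.
Definition cls (x : A) : Qt := exist _ (al x) (ex_intro _ x erefl).
Definition rep (q : Qt) : A := proj1_sig (constructive_indefinite_description _ (proj2_sig q)).
Lemma repP q : proj1_sig q = al (rep q).
Proof. exact: (proj2_sig (constructive_indefinite_description _ (proj2_sig q))). Qed.

Lemma al_refl x : al x x. Proof. case: alC => [[r _ _] _]; exact: r. Qed.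
Lemma al_sym x y : al x y -> al y x. Proof. case: alC => [[_ s _] _]; exact: s. Qed.
Lemma al_trans x y z : al x y -> al y z -> al x z.
Proof. case: alC => [[_ _ t] _]; exact: t. Qed.

Lemma cls_eq x y : cls x = cls y <-> al x y.
Proof.
split.
- move=> /(f_equal (@proj1_sig _ _)) /= E. rewrite E. exact: al_refl.
- move=> H. apply: eq_sig_hprop => [? ? ?|]; first exact: proof_irrelevance.
  simpl. apply: functional_extensionality => z. apply: propositional_extensionality.
  split => H'; [exact: al_trans (al_sym H) H' | exact: al_trans H H'].
Qed.

Lemma cls_rep q : cls (rep q) = q.
Proof.
apply: eq_sig_hprop => [? ? ?|]; first exact: proof_irrelevance.
by rewrite /= -repP.
Qed.

Definition Qalg : algebra F := @Algebra F Qt (fun s qs => cls (op A s (fun i => rep (qs i)))).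

Lemma cls_hom s (a : 'I_(arity s) -> A) :
  cls (op A s a) = op Qalg s (fun i => cls (a i)).
Proof.
rewrite /= cls_eq. case: alC => _ c; apply: c => i.
apply/cls_eq; by rewrite cls_rep.
Qed.
End Quot.

Definition relU {T} (S : classical_sets.set (T * T)) (x y : T) := x = y \/ S (x, y).

Lemma chain_fin (T : Type) (Fm : classical_sets.set (classical_sets.set (T * T))) :
  classical_sets.total_on Fm classical_sets.subset ->
  forall n (g : 'I_n -> T * T),
  (forall i, (g i).1 = (g i).2 \/ exists2 X, Fm X & X (g i)) ->
  (forall i, (g i).1 = (g i).2) \/ exists2 X, Fm X & forall i, (g i).1 = (g i).2 \/ X (g i).
Proof.
move=> tot; elim=> [|n IH] g H.
  by left; case.
have [Hall|[X FX HX]] := IH (fun i => g (lift ord0 i)) (fun i => H _).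
- case: (H ord0) => [H0|[Y FY HY]].
  + left => i; case: (unliftP ord0 i) => [j ->|->] //; exact: Hall.
  + right; exists Y => // i; case: (unliftP ord0 i) => [j ->|->]; [left; exact: Hall|by right].
- case: (H ord0) => [H0|[Y FY HY]].
  + right; exists X => // i; case: (unliftP ord0 i) => [j ->|->]; [exact: HX|by left].
  + right; case: (tot _ _ FX FY) => sub.
    * exists Y => // i; case: (unliftP ord0 i) => [j ->|->]; last by right.
      case: (HX j) => [?|?]; [by left|right; exact: sub].
    * exists X => // i; case: (unliftP ord0 i) => [j ->|->]; first exact: HX.
      right; exact: sub.
Qed.

Theorem theorem3p6 (F : signature) (A : algebra F) (tau : A -> A) :
  state_morphism A tau ->
  subdirectly_irreducible (sm_alg A tau) ->
  ~ subdirectly_irreducible A ->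
  exists B : algebra F, subdirectly_irreducible B /\
    exists f : A -> prod_alg B B, sm_embedding A tau (prod_alg B B) (diag_tau B) f.
Proof.
move=> [tauH tauI] [mu [muC [[a [b [mab ab]]] muL]]] _.
pose P : classical_sets.set (classical_sets.set (A * A)) :=
  fun S => is_congruence A (relU S) /\ ~ S (a, b).
have [A0 [[A0C A0ab] A0max]] : exists A0, P A0 /\
    (forall B, classical_sets.proper A0 B -> ~ P B).
  apply: classical_sets.Zorn_bigcup => Fm FP tot.
  have U2 : forall p q, (exists2 X, Fm X & X p) -> (exists2 X, Fm X & X q) ->
      exists2 X, Fm X & X p /\ X q.
    move=> p q [X FX Xp] [Y FY Yq]; case: (tot _ _ FX FY) => sub.
    - by exists Y => //; split => //; apply: sub.
    - by exists X => //; split => //; apply: sub.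
  have Xeq : forall X, Fm X -> Equivalence (relU X).
    by move=> X /FP [[]].
  split; last first.
    move=> [X FX Xab]; by case: (FP _ FX).
  split.
  - split.
    + by move=> x; left.
    + move=> x y [->|[X FX Xp]]; first by left.
      have := @Equivalence_Symmetric _ _ (Xeq _ FX) x y (or_intror Xp).
      case=> [->|?]; [by left|right; by exists X].
    + move=> x y z [->|Hxy] //. move=> [<-|Hyz]; first by right.
      have [X FX [X1 X2]] := U2 _ _ Hxy Hyz.
      have := @Equivalence_Transitive _ _ (Xeq _ FX) x y z (or_intror X1) (or_intror X2).
      case=> [->|?]; [by left|right; by exists X].
  - move=> s u v Huv.
    have Huv' : forall i, (u i, v i).1 = (u i, v i).2 \/ exists2 X, Fm X & X (u i, v i).
      move=> i; case: (Huv i) => [->|[X FX HX]]; [by left|right; by exists X].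
    have [Hall|[X FX HX]] := chain_fin tot Huv'.
    + left; congr (op A s); exact: functional_extensionality.
    + have [[_ c] _] := FP _ FX. case: (c s u v HX) => [->|?]; [by left|right; by exists X].
pose al := relU A0.
have alab : ~ al a b by case.
pose B := Qalg al.
exists B; split.
- exists (fun q1 q2 => forall th, is_congruence B th -> nontrivial_rel th -> th q1 q2).
  split; [split; [split|]|split].
  + move=> x th [[r _ _] _] _; exact: r.
  + move=> x y H th thC nt; have [[_ s _] _] := thC; exact: (s _ _ (H _ thC nt)).
  + move=> x y z H1 H2 th thC nt; case: (thC) => [[_ _ t] _].
    exact: (t _ _ _ (H1 _ thC nt) (H2 _ thC nt)).
  + move=> s u v H th thC nt; case: (thC) => [_ c]; apply: c => i; exact: H.
  + exists (cls al a), (cls al b); split; last by move/(cls_eq A0C).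
    move=> th thC [q1 [q2 [thq nq]]].
    pose S : classical_sets.set (A * A) := fun p => th (cls al p.1) (cls al p.2).
    have SC : is_congruence A (relU S).
      have [[r s t] c] := thC.
      have E : forall x y, relU S x y <-> th (cls al x) (cls al y).
        move=> x y; split; [by case=> [->|] //; apply: r|by right].
      split; first split.
      * by move=> x; left.
      * by move=> x y /E /s /E.
      * by move=> x y z /E H1 /E H2; apply/E; exact: t H1 H2.
      * move=> s0 u v H; apply/E; rewrite !(cls_hom A0C); apply: c => i; exact/E.
    apply: NNPP => nab. apply: (A0max S); last by split.
    split.
    * move=> p A0p; rewrite /S.
      have -> : cls al p.1 = cls al p.2 by apply/(cls_eq A0C); right; case: p A0p.
      by case: thC => [[r _ _] _].
    * move=> sub; apply: nq; rewrite -(cls_rep q1) -(cls_rep q2); apply/(cls_eq A0C).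
      right; apply: (sub (rep q1, rep q2)); by rewrite /S /= !cls_rep.
  + by move=> th thC nt x y; apply.
- exists (fun x => (cls al (tau x), cls al x)); split; [|split].
  + move=> x y E; have E1 : cls al (tau x) = cls al (tau y) := f_equal fst E; have E2 : cls al x = cls al y := f_equal snd E; move: (proj1 (cls_eq A0C _ _) E1) (proj1 (cls_eq A0C _ _) E2) => {}E1 {}E2; apply: NNPP => nxy.
    pose g := fun x y => al x y /\ al (tau x) (tau y).
    have gC : is_congruence (sm_alg A tau) g.
      split; first split.
      * move=> z; split; exact: al_refl A0C _.
      * by move=> z w [H1 H2]; split; apply: (al_sym A0C).
      * move=> z w t [H1 H2] [H3 H4]; split; [exact: (al_trans A0C H1 H3)|exact: (al_trans A0C H2 H4)].
      * case=> [s|] u v H /=.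
        -- change (g (op A s u) (op A s v)); rewrite /g !tauH; have [_ c] := A0C; split; apply: c => i; by case: (H i).
        -- case: (H ord0) => H1 H2; split => //; by rewrite !tauI.
    have := muL g gC (ex_intro _ x (ex_intro _ y (conj (conj E2 E1) nxy))) a b mab.
    by case.
  + move=> s u /=; rewrite tauH; congr pair; rewrite (cls_hom A0C); by [].
  + move=> x; by rewrite /diag_tau /= tauI.
Qed.
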